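(* If $(X,d_X)$ is a locally finite metric space (every bounded subset is finite), then $\Delta_X^{(c)}(R)\leq R$ for all $R\in[0,\infty)$. Consequently, for every $\varepsilon>0$, every locally finite metric space $(2+\varepsilon)$-Lipschitz embeds into $c_0^+$.
   Context: For a cover $\mathcal{U}$ of $X$: $\mathrm{diam}(\mathcal{U})=\sup_{U\in\mathcal{U}}\mathrm{diam}(U)$; $\mathcal{L}(\mathcal{U})=\sup\{d\in[0,\infty): \text{every } E\subseteq X \text{ with } \mathrm{diam}(E)<d \text{ is contained in some } U\in\mathcal{U}\}$; point-finite means each point lies in only finitely many members. $\Delta_X^{(c)}(R)=\inf\{\mathrm{diam}(\mathcal{U}): \mathcal{U} \text{ point-finite cover of } X,\ \mathcal{L}(\mathcal{U})\geq R\}$. $c_0^+=\{(x_i)_{i\in\mathbb{N}}\in c_0: x_i\geq0\ \forall i\}$ with the sup-norm metric. A map $f$ is a $K$-Lipschitz embedding if it is injective and $\mathrm{Lip}(f)\cdot\mathrm{Lip}(f^{-1})\leq K$, where $\mathrm{Lip}$ denotes the Lipschitz constant. *)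

(* Defs.v *)
From HB Require Import structures.
From mathcomp Require Import all_boot all_order all_algebra.
From mathcomp Require Import all_classical all_reals all_analysis.
Set Implicit Arguments. Unset Strict Implicit. Unset Printing Implicit Defensive.
Import Order.TTheory GRing.Theory Num.Theory.
Import numFieldNormedType.Exports.
Local Open Scope classical_set_scope.
Local Open Scope ring_scope.

Section Defs.
Variable R : realType.
Variable X : Type.
Variable d : X -> X -> R.

Definition is_metric : Prop :=
  (forall x y, 0 <= d x y) /\ (forall x y, d x y = 0 <-> x = y) /\
  (forall x y, d x y = d y x) /\ (forall x y z, d x z <= d x y + d y z).

Definition bounded_subset (A : set X) : Prop :=
  exists M : R, forall x y, A x -> A y -> d x y <= M.

Definition locally_finite : Prop :=
  forall A : set X, bounded_subset A -> finite_set A.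

(* diameter, in the extended reals; convention diam(empty) = 0 *)
Definition diam (E : set X) : \bar R :=
  ereal_sup ([set 0%E] `|` [set (d x y)%:E | x in E & y in E]).

Definition is_cover (U : set (set X)) : Prop := \bigcup_(A in U) A = setT.

Definition point_finite (U : set (set X)) : Prop :=
  forall x, finite_set [set A | U A /\ A x].

Definition cover_diam (U : set (set X)) : \bar R :=
  ereal_sup ([set 0%E] `|` [set diam A | A in U]).

Definition lebesgue_number (U : set (set X)) : \bar R :=
  ereal_sup [set r%:E | r in [set r : R | 0 <= r /\
     forall E : set X, (diam E < r%:E)%E -> exists2 A, U A & E `<=` A]].

Definition Delta_c (r : R) : \bar R :=
  ereal_inf [set cover_diam U | U in [set U | is_cover U /\ point_finite U /\
                                      (r%:E <= lebesgue_number U)%E]].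
End Defs.

Section C0.
Variable R : realType.

Definition in_c0plus (s : nat -> R) : Prop :=
  (forall i, 0 <= s i) /\ s @ \oo --> (0 : R).

(* sup-norm distance (the sup is finite for elements of c_0) *)
Definition c0dist (s t : nat -> R) : R := sup [set `|s i - t i| | i in [set: nat]].

Definition Lip_to_c0 (X : Type) (d : X -> X -> R) (f : X -> nat -> R) : \bar R :=
  ereal_sup ([set 0%E] `|`
    [set v | exists x y, x <> y /\ v = (c0dist (f x) (f y) / d x y)%:E]).

Definition Lip_inv_to_c0 (X : Type) (d : X -> X -> R) (f : X -> nat -> R) : \bar R :=
  ereal_sup ([set 0%E] `|`
    [set v | exists x y, x <> y /\ v = (d x y / c0dist (f x) (f y))%:E]).

Definition lip_embeds_c0plus (X : Type) (d : X -> X -> R) (K : R) : Prop :=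
  exists f : X -> nat -> R, (forall x, in_c0plus (f x)) /\ injective f /\
    (Lip_to_c0 d f * Lip_inv_to_c0 d f <= K%:E)%E.
End C0.

(* Main.v *)
Require Import Defs.
From mathcomp Require Import all_boot all_order all_algebra.
From mathcomp Require Import all_classical all_reals all_analysis.
From mathcomp Require Import ring lra.
Set Implicit Arguments. Unset Strict Implicit. Unset Printing Implicit Defensive.
Import Order.TTheory GRing.Theory Num.Theory.
Import numFieldNormedType.Exports.
Local Open Scope classical_set_scope.
Local Open Scope ring_scope.

Section P1.
Variable R : realType.
Variable X : Type.
Variable d : X -> X -> R.
Hypothesis hd : is_metric d.
Hypothesis hlf : locally_finite d.

Lemma d_ge0 x y : 0 <= d x y. Proof. by case: hd. Qed.
Lemma d_xx x : d x x = 0. Proof. by case: hd => _ [H _]; apply H. Qed.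
Lemma d_sym x y : d x y = d y x. Proof. by case: hd => _ [_ [H _]]. Qed.
Lemma d_tri x y z : d x z <= d x y + d y z. Proof. by case: hd => _ [_ [_ H]]. Qed.
Lemma d_eq0 x y : d x y = 0 -> x = y. Proof. by case: hd => _ [H _]; apply H. Qed.

Lemma diam_le (E : set X) (r : R) : 0 <= r ->
  (forall x y, E x -> E y -> d x y <= r) -> (diam d E <= r%:E)%E.
Proof.
move=> r0 H; apply: ge_ereal_sup => _ [->|[x Ex [y Ey <-]]]; rewrite ?lee_fin //.
exact: H.
Qed.

Lemma d_le_diam (E : set X) x y : E x -> E y -> ((d x y)%:E <= diam d E)%E.
Proof. by move=> Ex Ey; apply: ereal_sup_ubound; right; exists x => //; exists y. Qed.

Lemma finite_subsets (B : set X) : finite_set B -> finite_set [set A : set X | A `<=` B].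
Proof.
move/(@finite_seqP {classic X}) => [s Bs].
pose F := fun m : (size s).-tuple bool => ([set` mask m s] : set X).
apply: (@sub_finite_set _ _ (F @` setT)); last first.
  by apply: finite_image; exact: finite_finset.
move=> A AB; exists (map_tuple (fun x => `[< A x >]) (in_tuple s)) => //.
rewrite /F /= -filter_mask; apply/seteqP; split => x /=.
  by rewrite mem_filter => /andP[/asboolP].
move=> Ax; rewrite mem_filter; apply/andP; split; first by apply/asboolP.
by have := AB x Ax; rewrite Bs.
Qed.

Lemma ball_finite x r : finite_set [set y | d x y <= r].
Proof.
apply: hlf; exists (r + r) => y z /= hy hz.
by apply: le_trans (d_tri y x z) _; rewrite d_sym; apply: lerD.
Qed.

Lemma part1 r : 0 <= r -> (Delta_c d r <= r%:E)%E.
Proof.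
move=> r0.
pose U := [set A : set X | (exists x, A = [set x]) \/ (diam d A < r%:E)%E].
have Udiam : forall A, U A -> (diam d A <= r%:E)%E.
  move=> A [[x ->]|/ltW //]; apply: diam_le => // y z -> ->; by rewrite d_xx.
apply: le_trans (ereal_inf_lbound _) _.
  exists U => //; split; [|split].
  - apply/seteqP; split => // x _; exists [set x] => //; left; by exists x.
  - move=> x; apply: (@sub_finite_set _ _ [set A : set X | A `<=` [set y | d x y <= r]]);
      last by apply: finite_subsets; exact: ball_finite.
    move=> A [UA Ax] y Ay /=.
    case: UA => [[z Az]|lt].
      by move: Ax Ay; rewrite Az /= => -> ->; rewrite d_xx.
    by rewrite -lee_fin; apply: le_trans (ltW lt); apply: d_le_diam.
  - apply: ereal_sup_ubound; exists r => //; split => // E lt; exists E => //.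
    by right.
apply: ge_ereal_sup => _ [->|[A UA <-]]; first by rewrite lee_fin.
exact: Udiam.
Qed.

Lemma lip_bound (f : X -> nat -> R) K : 0 <= K ->
  (forall x y, x <> y -> c0dist (f x) (f y) / d x y <= 1) ->
  (forall x y, x <> y -> d x y / c0dist (f x) (f y) <= K) ->
  (Lip_to_c0 d f * Lip_inv_to_c0 d f <= K%:E)%E.
Proof.
move=> K0 H1 H2.
have L1 : (Lip_to_c0 d f <= 1%:E)%E.
  apply: ge_ereal_sup => v [->|[x [y [nxy ->]]]]; rewrite lee_fin //; exact: H1.
have L2 : (Lip_inv_to_c0 d f <= K%:E)%E.
  apply: ge_ereal_sup => v [->|[x [y [nxy ->]]]]; rewrite lee_fin //; exact: H2.
have G1 : (0 <= Lip_to_c0 d f)%E by apply: ereal_sup_ubound; left.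
have G2 : (0 <= Lip_inv_to_c0 d f)%E by apply: ereal_sup_ubound; left.
by apply: le_trans (lee_pmul G1 G2 L1 L2) _; rewrite -EFinM mul1r.
Qed.

Lemma c0dist_le (s t : nat -> R) M : (forall i, `|s i - t i| <= M) -> c0dist s t <= M.
Proof.
move=> H; apply: ge_sup; first by exists `|s 0%N - t 0%N|, 0%N.
by move=> _ [i _ <-].
Qed.

Lemma c0dist_ge (s t : nat -> R) M i : (forall i, `|s i - t i| <= M) ->
  `|s i - t i| <= c0dist s t.
Proof.
move=> H; apply: ub_le_sup; last by exists i.
by exists M => _ [j _ <-].
Qed.

Lemma maxlip (a b : R) : `|Num.max 0 a - Num.max 0 b| <= `|a - b|.
Proof.
have n1 := ler_norm (a - b); have n2 := ler_norm (b - a); rewrite distrC in n2.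
have [ha|ha] := lerP a 0; have [hb|hb] := lerP b 0; rewrite ler_norml; lra.
Qed.

Lemma countable_X (y0 : X) : exists h : X -> nat, injective h.
Proof.
have : countable [set: X].
  have -> : [set: X] = \bigcup_(n in [set: nat]) [set y | d y0 y <= n%:R].
    apply/seteqP; split => // y _; exists (Num.Def.archi_bound (d y0 y)) => //=.
    exact/ltW/archi_boundP/d_ge0.
  apply: bigcup_countable; first by apply/countable_injP; exists id => ? ? _ _.
  move=> n _; apply: finite_set_countable; exact: ball_finite.
move/countable_injP => [h hi]; exists h => a b hab; by apply: hi => //; rewrite in_setT.
Qed.

Section Emb.
Variable eps : R.
Hypothesis eps0 : 0 < eps.
Variable y0 : X.
Variable h : X -> nat.
Hypothesis hinj : injective h.

Definition lam := 2 / (2 + eps).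
Let lamK : lam * (2 + eps) = 2.
Proof. have e := eps0; rewrite /lam divfK //; apply: lt0r_neq0; lra. Qed.
Let lam0 : 0 < lam.
Proof. have e := eps0; rewrite /lam divr_gt0 //; lra. Qed.
Let lam1 : lam < 1.
Proof. have e := eps0; rewrite /lam ltr_pdivrMr; lra. Qed.

Definition phi (y x : X) : R := Num.max 0 (lam * d y0 y - d x y).

Definition pre (i : nat) : option X :=
  match pselect (exists y, h y = i) with
  | left P => Some (projT1 (cid P))
  | right _ => None
  end.

Lemma pre_h y : pre (h y) = Some y.
Proof.
rewrite /pre; case: pselect => [P|]; last by case; exists y.
by case: (cid P) => z /= /hinj ->.
Qed.

Lemma pre_Some i y : pre i = Some y -> h y = i.
Proof.
rewrite /pre; case: pselect => [P|] // [<-].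
by case: (cid P).
Qed.

Definition fe (x : X) (i : nat) : R := if pre i is Some y then phi y x else 0.

Lemma fe_lip x x' i : `|fe x i - fe x' i| <= d x x'.
Proof.
rewrite /fe; case: (pre i) => [y|]; last by rewrite subrr normr0 d_ge0.
apply: le_trans (maxlip _ _) _.
have := d_tri x' x y; have := d_tri x x' y; rewrite (d_sym x' x) ler_norml => *.
lra.
Qed.

Lemma fe_sep x x' : d y0 x' <= d y0 x -> lam * d x x' / 2 <= `|fe x (h x) - fe x' (h x)|.
Proof.
move=> le; rewrite /fe pre_h /phi d_xx subr0 (d_sym x' x).
have l0 := lam0; have l1 := lam1.
have a0 := d_ge0 y0 x.
rewrite (max_r (x := 0) (y := lam * d y0 x)); last by rewrite mulr_ge0 // ltW.
have D0 := d_ge0 x x'.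
have T := d_tri x' y0 x; rewrite (d_sym x' y0) (d_sym x' x) in T.
have : lam * d x x' <= lam * (2 * d y0 x) by rewrite ler_wpM2l //; [exact: ltW| lra].
move=> H2.
have M0 : 0 <= lam * d y0 x by rewrite mulr_ge0 // ltW.
have M1 : 0 <= lam * d x x' by rewrite mulr_ge0 // ltW.
have [h1|h1] := lerP (lam * d y0 x - d x x') 0.
  rewrite subr0 ger0_norm //; nra.
rewrite ger0_norm; nra.
Qed.

Lemma fe_sep2 x x' : exists i, lam * d x x' / 2 <= `|fe x i - fe x' i|.
Proof.
case: (lerP (d y0 x') (d y0 x)) => le.
  by exists (h x); exact: fe_sep.
exists (h x'); have := fe_sep (ltW le); rewrite d_sym distrC; exact.
Qed.

Lemma fe_c0dist_lb x x' : lam * d x x' / 2 <= c0dist (fe x) (fe x').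
Proof.
have [i hi] := fe_sep2 x x'; apply: le_trans hi _.
apply: (@c0dist_ge _ _ (d x x')) => j; exact: fe_lip.
Qed.

Lemma d_gt0 x x' : x <> x' -> 0 < d x x'.
Proof.
move=> nx; rewrite lt0r d_ge0 andbT; apply/eqP => /d_eq0; exact: nx.
Qed.

Lemma fe_c0dist_gt0 x x' : x <> x' -> 0 < c0dist (fe x) (fe x').
Proof.
move=> nx; apply: lt_le_trans (fe_c0dist_lb x x').
by rewrite divr_gt0 // mulr_gt0 // d_gt0.
Qed.

Lemma fe_inj : injective fe.
Proof.
move=> x x' E; apply: contrapT => nx; have := fe_c0dist_gt0 nx.
rewrite E; apply/negP; rewrite -leNgt.
by apply: c0dist_le => i; rewrite subrr normr0.
Qed.

Lemma fe_lip_bound :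
  (Lip_to_c0 d fe * Lip_inv_to_c0 d fe <= (2 + eps)%:E)%E.
Proof.
have e := eps0.
apply: lip_bound; first by lra.
  move=> x y nxy; rewrite ler_pdivrMr ?d_gt0 // mul1r.
  by apply: c0dist_le => i; exact: fe_lip.
move=> x y nxy; rewrite ler_pdivrMr ?fe_c0dist_gt0 //.
have E : (2 + eps) * (lam * d x y / 2) = d x y.
  rewrite /lam; field; apply: lt0r_neq0; lra.
rewrite -{1}E; apply: ler_wpM2l; first by lra.
exact: fe_c0dist_lb.
Qed.

Lemma fe_c0 x : in_c0plus (fe x).
Proof.
split.
  by move=> i; rewrite /fe; case: pre => // y; rewrite /phi le_max lexx.
have l0 := lam0; have l1 := lam1.
pose S := [set y | (1 - lam) * d y0 y <= d y0 x].
have fS : finite_set S.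
  apply: hlf; exists (2 * (d y0 x / (1 - lam))) => y z Sy Sz.
  have Hy : d y0 y <= d y0 x / (1 - lam) by rewrite ler_pdivlMr ?subr_gt0 // mulrC.
  have Hz : d y0 z <= d y0 x / (1 - lam) by rewrite ler_pdivlMr ?subr_gt0 // mulrC.
  have := d_tri y y0 z; rewrite (d_sym y y0); lra.
have /finite_seqP [s Es] := finite_image h fS.
apply: cvg_near_cst; exists (\max_(i <- s) i).+1 => // n /= Nn.
rewrite /fe; case E: (pre n) => [y|] //.
have hy := pre_Some E.
rewrite /phi; have [//|pos] := lerP (lam * d y0 y - d x y) 0.
exfalso.
have Sy : S y.
  rewrite /S /=; have := d_tri y0 x y; nra.
have : (h @` S) (h y) by exists y.
rewrite Es /= => /(@leq_bigmax_seq _ _ predT id) => /(_ isT).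
by rewrite hy => le; move: Nn; rewrite ltnNge le.
Qed.
End Emb.
End P1.

Theorem proposition4p1 (R : realType) (X : Type) (d : X -> X -> R)
  (hd : is_metric d) (hlf : locally_finite d) :
  (forall r : R, 0 <= r -> (Delta_c d r <= r%:E)%E) /\
  (forall eps : R, 0 < eps -> lip_embeds_c0plus d (2 + eps)).
Proof.
split; first by move=> r r0; exact: part1.
move=> eps e0.
case: (pselect (exists y0 : X, True)) => [[y0 _]|nX].
  have [h hi] := countable_X hd hlf y0.
  exists (fe d eps y0 h); split; [|split].
  - by move=> x; apply: fe_c0.
  - exact: fe_inj.
  - exact: fe_lip_bound.
exists (fun _ _ => 0); split; [|split].
- by move=> x; exfalso; apply: nX; exists x.
- by move=> x; exfalso; apply: nX; exists x.
- apply: lip_bound; first by rewrite addr_ge0 // ltW.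
  + by move=> x; exfalso; apply: nX; exists x.
  + by move=> x; exfalso; apply: nX; exists x.
Qed.
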